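(* Let $L\ge18$ with $L\equiv 12\pmod{24}$. Then $M_S(L,3)\le (L-4)/8$.
   Context: $\mathcal{P}(L,\omega)$ is the set of $\omega$-element subsets of $\mathbb{Z}_L$. For $\mathcal{I}\in\mathcal{P}(L,\omega)$: $d(\mathcal{I})=\{a-b \bmod L: a,b\in\mathcal{I}\}$, $d^*(\mathcal{I})=d(\mathcal{I})\setminus\{0\}$. A strongly conflict-avoiding code (SCAC) of length $L$ and weight $\omega$ is a set $\mathcal{C}=\{\mathcal{I}_1,\dots,\mathcal{I}_M\}\subseteq\mathcal{P}(L,\omega)$ such that for all $j\ne k$, $\big(d^*(\mathcal{I}_j)\cup(d^*(\mathcal{I}_j)+1)\cup(d^*(\mathcal{I}_j)-1)\big)\cap d(\mathcal{I}_k)=\emptyset$ (shifts mod $L$). $M_S(L,\omega)$ denotes the maximum number of codewords in an SCAC of length $L$ and weight $\omega$. *)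

(* Defs.v *)
(* Z_L is modelled by 'Z_L (statement assumes L >= 18, so
   'Z_L is exactly Z/LZ). *)
From HB Require Import structures.
From mathcomp Require Import all_boot all_order all_algebra.
Set Implicit Arguments. Unset Strict Implicit. Unset Printing Implicit Defensive.
Import GRing.Theory.
Local Open Scope ring_scope.

Definition dset (L : nat) (I : {set 'Z_L}) : {set 'Z_L} :=
  [set a - b | a in I, b in I].

Definition dstar (L : nat) (I : {set 'Z_L}) : {set 'Z_L} :=
  dset I :\ 0.

Definition dstar_ext (L : nat) (I : {set 'Z_L}) : {set 'Z_L} :=
  dstar I :|: [set x + 1 | x in dstar I] :|: [set x - 1 | x in dstar I].

Definition is_SCAC (L w : nat) (C : {set {set 'Z_L}}) : Prop :=
  (forall I, I \in C -> #|I| = w) /\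
  (forall J K, J \in C -> K \in C -> J != K ->
     [disjoint dstar_ext J & dset K]).

(* Main.v *)
Require Import Defs.
From mathcomp Require Import all_boot all_order all_algebra.
From HB Require Import structures.
From mathcomp Require Import zify.

Set Implicit Arguments. Unset Strict Implicit. Unset Printing Implicit Defensive.

Definition inD (N g1 g2 g3 v : nat) : Prop :=
  v = g1 \/ v = N - g1 \/ v = g2 \/ v = N - g2 \/ v = g3 \/ v = N - g3.

Fixpoint incr (s : seq nat) : Prop :=
  match s with
  | a :: ((b :: _) as s') => a < b /\ incr s'
  | _ => True
  end.

Definition good N (P : nat -> Prop) v := v < N /\ (P v \/ (1 <= v /\ P (v - 1))).
Definition goodl N (P : nat -> Prop) (s : seq nat) := foldr (fun v Q => good N P v /\ Q) True s.
Definition W N (P : nat -> Prop) k := exists s, incr s /\ goodl N P s /\ k <= size s.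

Definition Concl (t N : nat) (P : nat -> Prop) : Prop :=
  (W N P 8 \/ (P (8*t+4) /\ W N P 4) \/ (P (12*t+6) /\ W N P 6)) /\
  ((exists v, P v /\ P (v+1)) -> W N P 10 \/ (P (8*t+4) /\ W N P 8) \/ (P (12*t+6) /\ W N P 8)) /\
  (P (12*t+6) -> P (6*t+3) \/ W N P 8).

Ltac dj := match goal with |- _ \/ _ => first [left; dj | right; dj] | |- _ /\ _ => split; dj | _ => lia end.
Ltac solveW s := exists s; simpl; rewrite /good /inD; dj.
Ltac refc := let v := fresh "v" in let Hv := fresh in let Hv1 := fresh in
  move=> [v [Hv Hv1]]; exfalso; move: Hv Hv1; rewrite /inD;
  case=> [->|[->|[->|[->|[->|->]]]]]; lia.
Ltac refh := let H := fresh in move=> H; exfalso; move: H; rewrite /inD; lia.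

Lemma core t N g1 g2 g3 : N = 24*t+12 -> 2 <= g1 -> g1 <= g2 -> g2 <= g3 -> g1 + g2 + g3 = N ->
  Concl t N (inD N g1 g2 g3).
Proof.
move=> hN h1 h2 h3 hs; rewrite /Concl.
have [hA|hBC] := ltnP (2*g3) N.
- have [e12|n12] := eqVneq g1 g2.
  + have [e23|n23] := eqVneq g2 g3.
    * have eg : g1 = 8*t+4 by lia.
      split; [right; left; split; [rewrite /inD; lia| solveW [:: g1; g1+1; N-g1; N-g1+1]]|].
      split; [refc|refh].
    * split; [left; solveW [:: g1; g1+1; g3; g3+1; N-g3; N-g3+1; N-g1; N-g1+1]|].
      split; [refc|refh].
  + have [e23|n23] := eqVneq g2 g3.
    * split; [left; solveW [:: g1; g1+1; g2; g2+1; N-g2; N-g2+1; N-g1; N-g1+1]|].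
      split; [refc|refh].
    * split; [left; solveW [:: g1; g2; g3; g3+1; N-g3; N-g2; N-g1; N-g1+1]|].
      split; last refh.
      have [c12|c12] := eqVneq g2 g1.+1; have [c23|c23] := eqVneq g3 g2.+1.
      -- move=> _; right; left; split; [rewrite /inD; lia|].
         solveW [:: g1; g2; g3; g3+1; N-g3; N-g2; N-g1; N-g1+1].
      -- move=> _; left; solveW [:: g1;g2;g2+1;g3;g3+1;N-g3;N-g3+1;N-g2;N-g1;N-g1+1].
      -- move=> _; left; solveW [:: g1; g1+1; g2; g3; g3+1; N-g3; N-g2; N-g2+1; N-g1; N-g1+1].
      -- refc.
- have [hB|hC] := eqVneq (2*g3) N.
  + have [e12|n12] := eqVneq g1 g2.
    * split; [right; right; split; [rewrite /inD; lia| solveW [:: g1;g1+1;g3;g3+1;N-g1;N-g1+1]]|].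
      split; [refc|move=> _; left; rewrite /inD; lia].
    * have W8 : W N (inD N g1 g2 g3) 8 by solveW [:: g1;g1+1;g2;g2+1;g3;g3+1;N-g2;N-g1].
      split; [by left|].
      split; [move=> _; right; right; split; [rewrite /inD; lia|exact W8]|by right].
  + have [e12|n12] := eqVneq g1 g2.
    * split; [left; solveW [:: g1; g1+1; g1+g2; g1+g2+1; N-g1-g2; N-g1-g2+1; N-g1; N-g1+1]|].
      split; [refc|refh].
    * split; [left; solveW [:: g1; g2; g1+g2; g1+g2+1; N-g1-g2; N-g2; N-g1; N-g1+1]|].
      split; last refh.
      have [c12|c12] := eqVneq g2 g1.+1.
      -- move=> _; left; solveW [:: g1;g2;g2+1;g1+g2;g1+g2+1;N-g1-g2;N-g1-g2+1;N-g2;N-g1;N-g1+1].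
      -- refc.
Qed.

Set Implicit Arguments. Unset Strict Implicit. Unset Printing Implicit Defensive.

Lemma goodl_equiv N (P Q : nat -> Prop) s : (forall v, P v <-> Q v) -> goodl N P s -> goodl N Q s.
Proof.
move=> hPQ; elim: s => //= v s IH [[h1 h2] h3]; split; last exact: IH.
split=> //; case: h2 => [/hPQ|[? /hPQ]]; [left|right]; by [].
Qed.

Lemma W_equiv N (P Q : nat -> Prop) k : (forall v, P v <-> Q v) -> W N P k -> W N Q k.
Proof. move=> hPQ [s [h1 [h2 h3]]]; exists s; split=> //; split=> //; exact: goodl_equiv h2. Qed.

Lemma Concl_equiv t N (P Q : nat -> Prop) : (forall v, P v <-> Q v) -> Concl t N P -> Concl t N Q.
Proof.
move=> hPQ [c1 [c2 c3]].
have hW := @W_equiv N P Q _ hPQ.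
split; [|split].
- case: c1 => [/hW|[[/hPQ ? /hW ?]|[/hPQ ? /hW ?]]]; tauto.
- move=> [v [/hPQ h1 /hPQ h2]]; case: (c2 (ex_intro _ v (conj h1 h2))) => [/hW|[[/hPQ ? /hW ?]|[/hPQ ? /hW ?]]]; tauto.
- move=> /hPQ /c3 [/hPQ|/hW]; tauto.
Qed.

Ltac pi := let v := fresh in move=> v; rewrite /inD; split; case=> [->|[->|[->|[->|[->|->]]]]]; dj.

Lemma core_all t N g1 g2 g3 : N = 24*t+12 -> 2 <= g1 -> 2 <= g2 -> 2 <= g3 -> g1 + g2 + g3 = N ->
  Concl t N (inD N g1 g2 g3).
Proof.
move=> hN h1 h2 h3 hs.
have E : forall a b c, (forall v, inD N a b c v <-> inD N g1 g2 g3 v) -> 2 <= a -> a <= b -> b <= c ->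
   a + b + c = N -> Concl t N (inD N g1 g2 g3).
  by move=> a b c hE ha hab hbc habc; apply: Concl_equiv hE _; apply: core.
have [l12|l12] := leqP g1 g2; have [l23|l23] := leqP g2 g3; have [l13|l13] := leqP g1 g3.
all: first [ apply: (E g1 g2 g3); [pi|lia..] | apply: (E g1 g3 g2); [pi|lia..] | apply: (E g2 g1 g3); [pi|lia..] | apply: (E g2 g3 g1); [pi|lia..] | apply: (E g3 g1 g2); [pi|lia..] | apply: (E g3 g2 g1); [pi|lia..] ].
Qed.

Import GRing.Theory.
Local Open Scope ring_scope.

Set Implicit Arguments. Unset Strict Implicit. Unset Printing Implicit Defensive.

Lemma valZn m (v : nat) : (v < m.+2)%N -> nat_of_ord (v%:R : 'Z_m.+2) = v.
Proof. by move=> hv; rewrite val_Zp_nat // modn_small. Qed.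

Lemma valBn m (a b : nat) : (a < m.+2)%N -> (b < m.+2)%N ->
  nat_of_ord ((a%:R : 'Z_m.+2) - b%:R) = if (b <= a)%N then (a - b)%N else (m.+2 + a - b)%N.
Proof.
move=> ha hb; case: leqP => h.
  by rewrite -natrB // valZn //; lia.
have -> : (a%:R - b%:R : 'Z_m.+2) = (m.+2 + a - b)%N%:R.
  rewrite natrB; last by lia.
  by rewrite natrD pchar_Zp // add0r.
by rewrite valZn //; lia.
Qed.

Lemma valB m (x y : 'Z_m.+2) :
  nat_of_ord (x - y) = if (nat_of_ord y <= nat_of_ord x)%N then (nat_of_ord x - nat_of_ord y)%N else (m.+2 + nat_of_ord x - nat_of_ord y)%N.
Proof. by rewrite -{1}(natr_Zp x) -{1}(natr_Zp y) valBn. Qed.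

Lemma dstar3 m (a b c : 'Z_m.+2) : (nat_of_ord a < nat_of_ord b)%N -> (nat_of_ord b < nat_of_ord c)%N ->
  forall x, x \in dstar [set a; b; c] <->
    inD m.+2 (nat_of_ord b - nat_of_ord a) (nat_of_ord c - nat_of_ord b) (m.+2 - (nat_of_ord c - nat_of_ord a)) (nat_of_ord x).
Proof.
move=> hab hbc x.
have ha : (nat_of_ord a < m.+2)%N := ltn_ord a.
have hb : (nat_of_ord b < m.+2)%N := ltn_ord b.
have hc : (nat_of_ord c < m.+2)%N := ltn_ord c.
rewrite /dstar /dset in_setD1; split.
- case/andP=> nz /imset2P [u v Hu Hv ex]; subst x.
  have H0 : nat_of_ord (u - v) != 0%N.
    apply: contraNneq nz => h; by rewrite -(natr_Zp (u - v)) h.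
  move: H0; rewrite valB.
  have h3 : forall w, w \in [set a; b; c] -> w = a \/ w = b \/ w = c.
    by move=> w; rewrite !inE => /orP [/orP [/eqP->|/eqP->]|/eqP->]; tauto.
  case: (h3 _ Hu) => [->|[->|->]]; case: (h3 _ Hv) => [->|[->|->]];
  case: leqP; rewrite /inD; lia.
- move=> hx.
  have hxn : x != 0.
    apply/eqP => x0; move: hx; rewrite x0 /inD /=; lia.
  have mem : forall u v, u \in [set a; b; c] -> v \in [set a; b; c] ->
     nat_of_ord x = nat_of_ord (u - v) ->
     (x != 0) && (x \in [set u - v | u in [set a;b;c], v in [set a;b;c]]).
    move=> u v hu hv huv; have exu : x = u - v by apply: val_inj.
    by rewrite hxn /= exu; apply: imset2_f.
  have ia : a \in [set a; b; c] by rewrite !inE !eqxx /= ?orbT.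
  have ib : b \in [set a; b; c] by rewrite !inE !eqxx /= ?orbT.
  have ic : c \in [set a; b; c] by rewrite !inE !eqxx /= ?orbT.
  move: hx; rewrite /inD => -[hx|[hx|[hx|[hx|[hx|hx]]]]].
  + by apply: (mem b a) => //; rewrite valB; case: leqP; lia.
  + by apply: (mem a b) => //; rewrite valB; case: leqP; lia.
  + by apply: (mem c b) => //; rewrite valB; case: leqP; lia.
  + by apply: (mem b c) => //; rewrite valB; case: leqP; lia.
  + by apply: (mem a c) => //; rewrite valB; case: leqP; lia.
  + by apply: (mem c a) => //; rewrite valB; case: leqP; lia.
Qed.

Set Implicit Arguments. Unset Strict Implicit. Unset Printing Implicit Defensive.

Definition Tset m (J : {set 'Z_m.+2}) := dstar J :|: [set y + 1 | y in dstar J].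

Lemma memT m (J : {set 'Z_m.+2}) x : (x \in Tset J) = (x \in dstar J) || (x - 1 \in dstar J).
Proof.
rewrite /Tset inE; congr (_ || _); apply/imsetP/idP => [[y hy ->]|h].
  by rewrite addrK.
by exists (x - 1) => //; rewrite subrK.
Qed.

Lemma incr_sorted s : incr s -> sorted ltn s.
Proof.
elim: s => [|a s IH] //=; case: s IH => [|b s] IH //= [h1 h2].
by rewrite h1 /=; apply: IH.
Qed.

Lemma goodl_mem N P s v : goodl N P s -> v \in s -> good N P v.
Proof.
elim: s => [|a s IH] //= [ha hs]; rewrite inE => /orP [/eqP->|hv] //; exact: IH.
Qed.

Lemma W_card m (A : {set 'Z_m.+2}) (P : nat -> Prop) k :
  (forall v, (v < m.+2)%N -> P v \/ ((1 <= v)%N /\ P (v-1)%N) -> (v%:R : 'Z_m.+2) \in A) ->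
  W m.+2 P k -> (k <= #|A|)%N.
Proof.
move=> hA [s [hi [hg hk]]].
apply: (leq_trans hk).
have us : uniq s := sorted_uniq ltn_trans ltnn (incr_sorted hi).
have hs : forall v, v \in s -> (v < m.+2)%N by move=> v /(goodl_mem hg) [].
rewrite -(size_map (fun v => (v%:R : 'Z_m.+2))) cardE.
apply: uniq_leq_size.
- rewrite map_inj_in_uniq // => u v hu hv e.
  by rewrite -(valZn (hs _ hu)) -(valZn (hs _ hv)) e.
- move=> y /mapP [v hv ->]; rewrite mem_enum.
  by case: (goodl_mem hg hv) => h1 h2; apply: hA.
Qed.

Lemma card3 m (J : {set 'Z_m.+2}) : #|J| = 3%N ->
  exists a b c : 'Z_m.+2, [/\ (nat_of_ord a < nat_of_ord b)%N, (nat_of_ord b < nat_of_ord c)%N & J = [set a; b; c]].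
Proof.
move=> hJ.
have u := enum_uniq (mem J).
have e : size (enum J) = 3%N by rewrite -cardE.
have hJe : forall s, enum J = s -> J = [set x in s].
  by move=> s es; apply/setP => w; rewrite inE -es mem_enum.
case E: (enum J) e u => [|x [|y [|z [|w s]]]] //= _.
rewrite !inE !andbT negb_or => /andP [/andP [nxy nxz] nyz].
have -> : J = [set x; y; z].
  by rewrite (hJe _ E); apply/setP => w; rewrite !inE orbA.
have sw : forall p q r : 'Z_m.+2, [set p; q; r] = [set q; p; r] /\ [set p; q; r] = [set p; r; q]
   /\ [set p; q; r] = [set q; r; p] /\ [set p; q; r] = [set r; p; q] /\ [set p; q; r] = [set r; q; p].
  move=> p q r; split; [|split; [|split; [|split]]]; apply/setP => w; rewrite !inE;
  by case: (w == p); case: (w == q); case: (w == r).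
have ne : forall p q : 'Z_m.+2, p != q -> nat_of_ord p != nat_of_ord q.
  by move=> p q; apply: contra => /eqP h; apply/eqP/val_inj.
move/ne: nxy => nxy; move/ne: nxz => nxz; move/ne: nyz => nyz.
have [l1|l1] := ltnP x y; have [l2|l2] := ltnP y z; have [l3|l3] := ltnP x z.
all: first [ exists x, y, z; split; [lia|lia|done]
           | exists x, z, y; split; [lia|lia|by case: (sw x y z) => _ []]
           | exists y, x, z; split; [lia|lia|by case: (sw x y z) => []]
           | exists y, z, x; split; [lia|lia|by case: (sw x y z) => _ [] _ []]
           | exists z, x, y; split; [lia|lia|by case: (sw x y z) => _ [] _ [] _ []]
           | exists z, y, x; split; [lia|lia|by case: (sw x y z) => _ [] _ [] _ [] _] ].
Qed.

Set Implicit Arguments. Unset Strict Implicit. Unset Printing Implicit Defensive.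

Definition vJ m t (J : {set 'Z_m.+2}) : nat :=
  (#|Tset J| + 4 * (((8*t+4)%N%:R : 'Z_m.+2) \in dstar J) + 2 * (((12*t+6)%N%:R : 'Z_m.+2) \in dstar J))%N.

Lemma perJ m t (J : {set 'Z_m.+2}) : m.+2 = (24*t+12)%N -> #|J| = 3%N ->
  (1 \notin dstar J) -> (-1 \notin dstar J) ->
  [/\ (8 <= vJ t J)%N,
      (forall z, z \in dstar J -> z + 1 \in dstar J -> (10 <= vJ t J)%N) &
      (((12*t+6)%N%:R : 'Z_m.+2) \in dstar J -> ((6*t+3)%N%:R : 'Z_m.+2) \in dstar J \/ (10 <= vJ t J)%N)].
Proof.
move=> hN hJ n1 nm1.
have [a [b [c [hab hbc eJ]]]] := card3 hJ.
have hc : (nat_of_ord c < m.+2)%N := ltn_ord c.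
have D := dstar3 hab hbc; rewrite -eJ in D.
set g1 := (nat_of_ord b - nat_of_ord a)%N in D.
set g2 := (nat_of_ord c - nat_of_ord b)%N in D.
set g3 := (m.+2 - (nat_of_ord c - nat_of_ord a))%N in D.
have v1 : nat_of_ord (1 : 'Z_m.+2) = 1%N.
  have := @valZn m 1%N isT. by rewrite mulr1n.
have vm1 : nat_of_ord (-1 : 'Z_m.+2) = m.+1.
  rewrite -sub0r valB v1 /=; lia.
have i1 : ~ inD m.+2 g1 g2 g3 1.
  move=> h; move/negP: n1; apply; apply/(D 1); by rewrite v1.
have im1 : ~ inD m.+2 g1 g2 g3 m.+1.
  move=> h; move/negP: nm1; apply; apply/(D (-1)); by rewrite vm1.
have hg : [/\ (2 <= g1)%N, (2 <= g2)%N, (2 <= g3)%N & (g1 + g2 + g3 = m.+2)%N].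
  have e1 : g1 <> 1%N by move=> e; apply: i1; left.
  have e2 : g2 <> 1%N by move=> e; apply: i1; right; right; left.
  have e3 : g3 <> 1%N by move=> e; apply: i1; right; right; right; right; left.
  rewrite /g1 /g2 /g3 in e1 e2 e3 *; split; lia.
case: hg => h1 h2 h3 hs.
set P := fun v => (v < m.+2)%N /\ ((v%:R : 'Z_m.+2) \in dstar J).
have PE : forall v, inD m.+2 g1 g2 g3 v <-> P v.
  move=> v; split.
  - move=> hv; have vl : (v < m.+2)%N by rewrite /inD in hv; lia.
    by split => //; apply/(D _); rewrite valZn.
  - by move=> [vl /(D _)]; rewrite valZn.
have CC := Concl_equiv PE (core_all hN h1 h2 h3 hs).
have Wc : forall k, W m.+2 P k -> (k <= #|Tset J|)%N.
  move=> k; apply: W_card => v vl [[_ hv]|[v1' [_ hv]]]; rewrite memT ?hv //.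
  have -> : (v%:R - 1 : 'Z_m.+2) = (v - 1)%N%:R by rewrite natrB.
  by rewrite hv orbT.
have N0 : (0 : 'Z_m.+2) \notin dstar J by rewrite /dstar in_setD1 eqxx.
have Pin : forall k, P k -> ((k%:R : 'Z_m.+2) \in dstar J) = true by move=> k [].
have Pk : forall k, (k < m.+2)%N -> ((k%:R : 'Z_m.+2) \in dstar J) -> P k by [].
case: CC => [c1 [c2 c3]].
split.
- rewrite /vJ; case: c1 => [/Wc|[[/Pin -> /Wc]|[/Pin -> /Wc]]]; lia.
- move=> z hz hz1.
  have ez : ((nat_of_ord z + 1)%N%:R : 'Z_m.+2) = z + 1 by rewrite natrD natr_Zp mulr1n.
  have hzl : (nat_of_ord z < m.+2)%N := ltn_ord z.
  have hv : exists v, P v /\ P (v + 1)%N.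
    exists (nat_of_ord z); split; first by split => //; rewrite natr_Zp.
    split; last by rewrite ez.
    rewrite ltn_neqAle; apply/andP; split; last by lia.
    apply/negP => /eqP e; move: hz1; rewrite -ez e.
    by rewrite pchar_Zp // (negbTE N0).
  rewrite /vJ; case: (c2 hv) => [/Wc|[[/Pin -> /Wc]|[/Pin -> /Wc]]]; lia.
- move=> hh; have Ph : P (12*t+6)%N by apply: Pk => //; lia.
  case: (c3 Ph) => [[_ hq]|/Wc hw]; [by left|right].
  by rewrite /vJ hh; lia.
Qed.

Set Implicit Arguments. Unset Strict Implicit. Unset Printing Implicit Defensive.

Lemma card_bigcup_disj (I T : finType) (P : {set I}) (F : I -> {set T}) :
  (forall i j, i \in P -> j \in P -> i != j -> [disjoint F i & F j]) ->
  #|\bigcup_(i in P) F i| = (\sum_(i in P) #|F i|)%N.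
Proof.
move=> dis; have [n] := ubnP #|P|; elim: n P dis => // n IH P dis hP.
case: (set_0Vmem P) => [->|[i iP]]; first by rewrite !big_set0 cards0.
rewrite (big_setD1 i iP) (big_setD1 i iP) /= cardsU.
have -> : F i :&: \bigcup_(j in P :\ i) F j = set0.
  apply/setP => x; rewrite !inE; apply/negP => /andP [xi /bigcupP [j]].
  rewrite !inE => /andP [ji jP] xj.
  have nij : i != j by rewrite eq_sym.
  by rewrite (disjointFr (dis i j iP jP nij) xi) in xj.
rewrite cards0 subn0 IH //.
- by move=> a b; rewrite !inE => /andP [_ aP] /andP [_ bP]; apply: dis.
- by move: hP; rewrite (cardsD1 i P) iP.
Qed.

Lemma sum_le1 (I : finType) (P : {set I}) (b : I -> bool) :
  (forall i j, i \in P -> j \in P -> b i -> b j -> i = j) -> (\sum_(i in P) b i <= 1)%N.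
Proof.
move=> h; case: (pickP [pred i | (i \in P) && b i]) => [i /andP [iP bi]|none].
  rewrite (bigD1 i iP) big1 ?bi //= => j /andP [jP nji].
  by case bj: (b j) => //; move: nji; rewrite (h _ _ jP iP bj bi) eqxx.
by rewrite big1 // => j jP; move: (none j); rewrite /= jP /=; case: (b j).
Qed.

Lemma sum_lin (I : finType) (P : {set I}) (f g h : I -> nat) a b :
  (\sum_(i in P) (f i + a * g i + b * h i) =
   \sum_(i in P) f i + a * \sum_(i in P) g i + b * \sum_(i in P) h i)%N.
Proof. by rewrite !big_split /= !big_distrr. Qed.

Local Close Scope ring_scope.

Set Implicit Arguments. Unset Strict Implicit. Unset Printing Implicit Defensive.

Theorem mainTheorem7 (L : nat) (hL : 18 <= L) (hmod : L = 12 %[mod 24])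
  (C : {set {set 'Z_L}}) (hC : is_SCAC 3 C) :
  #|C| <= (L - 4) %/ 8.
Proof.
case: L hL hmod C hC => [|[|m]] // hL hmod C hC.
have [t hN] : exists t, m.+2 = (24*t+12)%N.
  by exists (m.+2 %/ 24); have := divn_eq m.+2 24; rewrite hmod; lia.
case: hC => hcard hdis.
have ht : (1 <= t)%N by lia.
have -> : ((m.+2 - 4) %/ 8 = 3*t+1)%N by lia.
rewrite leqNgt; apply/negP => hn0.
have hn : (3*t+1 < #|C|)%N := hn0; clear hn0.
Local Open Scope ring_scope.
have v1 : nat_of_ord (1 : 'Z_m.+2) = 1%N.
  have := @valZn m 1%N isT. by rewrite mulr1n.
have zero_dset : forall K, K \in C -> (0 : 'Z_m.+2) \in dset K.
  move=> K hK; have : (0 < #|K|)%N by rewrite hcard.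
  case/card_gt0P => a aK; apply/imset2P; exists a a => //; by rewrite subrr.
have ext : forall (J : {set 'Z_m.+2}) z, z \in dstar J ->
    [/\ z \in dstar_ext J, z + 1 \in dstar_ext J & z - 1 \in dstar_ext J].
  move=> J z hz; split.
  - by rewrite /dstar_ext !in_setU hz.
  - by rewrite /dstar_ext !in_setU (imset_f (fun x => x + 1) hz) /= orbT.
  - by rewrite /dstar_ext !in_setU (imset_f (fun x => x - 1) hz) /= orbT.
have sub : forall (K : {set 'Z_m.+2}) y, y \in dstar K -> y \in dset K.
  by move=> K y; rewrite /dstar in_setD1 => /andP [].
have F3 : forall J K z y, J \in C -> K \in C -> J != K -> z \in dstar J -> y \in dstar K ->
    [/\ z != y, z + 1 != y & z - 1 != y].
  move=> J K z y hJ hK nJK hz hy; have D := hdis J K hJ hK nJK.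
  case: (ext _ _ hz) => e0 e1 e2; have hy' := sub _ _ hy.
  split; apply/eqP => e.
  - by move: hy'; rewrite -e (disjointFr D e0).
  - by move: hy'; rewrite -e (disjointFr D e1).
  - by move: hy'; rewrite -e (disjointFr D e2).
have C2 : (1 < #|C|)%N by lia.
have other : forall J, J \in C -> exists K, K \in C /\ J != K.
  move=> J hJ; have : (0 < #|C :\ J|)%N by move: C2; rewrite (cardsD1 J) hJ; lia.
  case/card_gt0P => K; rewrite !inE => /andP [nKJ hK]; exists K; split => //.
  by rewrite eq_sym.
have F2 : forall J, J \in C -> (1 \notin dstar J) /\ (-1 \notin dstar J).
  move=> J hJ; case: (other J hJ) => K [hK nJK]; have D := hdis J K hJ hK nJK.
  have z0 := zero_dset K hK.
  split; apply/negP => h; case: (ext _ _ h) => _ e1 e2.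
  - by rewrite subrr in e2; rewrite (disjointFr D e2) in z0.
  - by rewrite addNr in e1; rewrite (disjointFr D e1) in z0.
have PJ := fun J (hJ : J \in C) => perJ hN (hcard J hJ) (F2 J hJ).1 (F2 J hJ).2.
have TD : forall J K, J \in C -> K \in C -> J != K -> [disjoint Tset J & Tset K].
  move=> J K hJ hK nJK; rewrite -setI_eq0; apply/eqP/setP => x.
  rewrite in_setI !memT in_set0; apply/negP => /andP [/orP [a|a] /orP [b|b]].
  - by case: (F3 _ _ _ _ hJ hK nJK a b); rewrite eqxx.
  - by case: (F3 _ _ _ _ hJ hK nJK a b) => _ _; rewrite eqxx.
  - by case: (F3 _ _ _ _ hJ hK nJK a b) => _; rewrite subrK eqxx.
  - by case: (F3 _ _ _ _ hJ hK nJK a b); rewrite eqxx.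
have N0 : forall J : {set 'Z_m.+2}, (0 : 'Z_m.+2) \notin dstar J.
  by move=> J; rewrite /dstar in_setD1 eqxx.
have TS : forall J, J \in C -> Tset J \subset ~: [set 0; 1].
  move=> J hJ; apply/subsetP => x; rewrite memT in_setC in_set2 negb_or => /orP [h|h].
  - apply/andP; split; apply/negP => /eqP e; move: h; rewrite e.
    + by rewrite (negbTE (N0 J)).
    + by rewrite (negbTE (F2 J hJ).1).
  - apply/andP; split; apply/negP => /eqP e; move: h; rewrite e.
    + by rewrite sub0r (negbTE (F2 J hJ).2).
    + by rewrite subrr (negbTE (N0 J)).
have cardU : #|\bigcup_(J in C) Tset J| = (\sum_(J in C) #|Tset J|)%N := card_bigcup_disj TD.
have subU : \bigcup_(J in C) Tset J \subset ~: [set 0; 1] by apply/bigcupsP => J hJ; exact: TS.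
have c01 : #|~: [set (0 : 'Z_m.+2); 1]| = m.
  have cT : #|'Z_m.+2| = m.+2 by rewrite card_ord.
  have := cardsC [set (0 : 'Z_m.+2); 1]; rewrite cards2 cT.
  rewrite (_ : ((0 : 'Z_m.+2) != 1) = true); first by lia.
  by rewrite eq_sym oner_neq0.
have sumT : (\sum_(J in C) #|Tset J| <= m)%N by rewrite -cardU; apply: leq_trans (subset_leq_card subU) _; rewrite c01.
have uniqw : forall w J K, J \in C -> K \in C -> w \in dstar J -> w \in dstar K -> J = K.
  move=> w J K hJ hK a b; case: (eqVneq J K) => // nJK.
  by case: (F3 _ _ _ _ hJ hK nJK a b); rewrite eqxx.
have s3 : (\sum_(J in C) (((8*t+4)%N%:R : 'Z_m.+2) \in dstar J) <= 1)%N.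
  by apply: sum_le1 => J K hJ hK; apply: uniqw.
have s2 : (\sum_(J in C) (((12*t+6)%N%:R : 'Z_m.+2) \in dstar J) <= 1)%N.
  by apply: sum_le1 => J K hJ hK; apply: uniqw.
have sumv : (\sum_(J in C) vJ t J = \sum_(J in C) #|Tset J|
     + 4 * \sum_(J in C) (((8*t+4)%N%:R : 'Z_m.+2) \in dstar J)
     + 2 * \sum_(J in C) (((12*t+6)%N%:R : 'Z_m.+2) \in dstar J))%N.
  by rewrite /vJ sum_lin.
have sum8 : (8 * #|C| <= \sum_(J in C) vJ t J)%N.
  rewrite mulnC -sum_nat_const; apply: leq_sum => J hJ; by case: (PJ J hJ).
have eqT : (\sum_(J in C) #|Tset J| = m)%N by lia.
have eqh : (\sum_(J in C) (((12*t+6)%N%:R : 'Z_m.+2) \in dstar J) = 1)%N by lia.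
have v8 : forall J, J \in C -> vJ t J = 8%N.
  move=> J hJ.
  have r1 : (8 * #|C :\ J| <= \sum_(K in C :\ J) vJ t K)%N.
    rewrite mulnC -sum_nat_const; apply: leq_sum => K; rewrite in_setD1 => /andP [_ hK].
    by case: (PJ K hK).
  have r2 : (#|C| = 1 + #|C :\ J|)%N by rewrite [in LHS](cardsD1 J C) hJ.
  have r3 : (\sum_(K in C) vJ t K = vJ t J + \sum_(K in C :\ J) vJ t K)%N := big_setD1 _ hJ.
  have r4 : (8 <= vJ t J)%N by case: (PJ J hJ).
  lia.
have [J4 [hJ4 hh4]] : exists J, J \in C /\ (((12*t+6)%N%:R : 'Z_m.+2) \in dstar J).
  case: (pickP [pred J | (J \in C) && (((12*t+6)%N%:R : 'Z_m.+2) \in dstar J)]) =>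
    [J /andP [? ?]|none]; first by exists J.
  move: eqh; rewrite big1 // => J hJ; move: (none J); rewrite /= hJ /=.
  by case: (_ \in _).
have hq4 : ((6*t+3)%N%:R : 'Z_m.+2) \in dstar J4.
  case: (PJ J4 hJ4) => _ _ h; case: (h hh4) => //; by rewrite v8.
have nocons : forall J K z, J \in C -> K \in C -> z \in dstar J -> z + 1 \in dstar K -> False.
  move=> J K z hJ hK a b; case: (eqVneq J K) => [eJK|nJK].
  - subst K; case: (PJ J hJ) => _ h _; have := h z a b; by rewrite v8.
  - by case: (F3 _ _ _ _ hJ hK nJK a b); rewrite eqxx.
have cover : forall x : 'Z_m.+2, x != 0 -> x != 1 -> exists J, J \in C /\ x \in Tset J.
  have eU : \bigcup_(J in C) Tset J = ~: [set 0; 1].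
    apply/eqP; rewrite eqEcard subU /= cardU c01 eqT leqnn //.
  move=> x n0 n1; have : x \in ~: [set 0; 1] by rewrite in_setC in_set2 negb_or n0 n1.
  by rewrite -eU => /bigcupP [J hJ hx]; exists J.
have ind : forall j, (j <= 3*t+1)%N ->
    exists J, J \in C /\ (((6*t+3+2*j)%N%:R : 'Z_m.+2) \in dstar J).
  elim => [|j IH] hj.
    by exists J4; rewrite (_ : (6*t+3+2*0 = 6*t+3)%N) // addn0.
  case: (IH (ltnW hj)) => [J [hJ hx]].
  have [y ey] : {y : 'Z_m.+2 | y = (6*t+3+2*j.+1)%N%:R} by eexists.
  have lt : (6*t+3+2*j.+1 < m.+2)%N by clear -hN hj; lia.
  have vy : nat_of_ord y = (6*t+3+2*j.+1)%N by rewrite ey valZn.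
  have y0 : y != 0.
    apply/negP => /eqP e; have : nat_of_ord y = 0%N by rewrite e.
    by rewrite vy addnC.
  have y1 : y != 1.
    apply/negP => /eqP e; have : nat_of_ord y = 1%N by rewrite e v1.
    by rewrite vy -addnA addnC.
  case: (cover y y0 y1) => K [hK]; rewrite memT => /orP [hy|hy]; first by exists K; rewrite -ey.
  exfalso; apply: (nocons J K _ hJ hK hx).
  suff -> : (((6*t+3+2*j)%N%:R + 1 : 'Z_m.+2)) = y - 1 by [].
  rewrite ey (_ : (6*t+3+2*j.+1 = (6*t+3+2*j) + 2)%N); last by clear; lia.
  move: (6*t+3+2*j)%N => a.
  by rewrite natrD -[2%N]/(1+1)%N natrD mulr1n addrA addrK.
case: (ind (3*t+1)%N (leqnn _)) => J [hJ hx].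
apply: (nocons J J4 _ hJ hJ4 hx).
rewrite (_ : (12*t+6 = (6*t+3+2*(3*t+1)) + 1)%N) in hh4; last by clear; lia.
move: hh4; move: (6*t+3+2*(3*t+1))%N => a.
by rewrite natrD mulr1n.
Qed.
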